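(* Let $F_2$ denote the free group of rank 2. Then the direct product $F_2\times F_2$, and hence any group containing a subgroup isomorphic to $F_2\times F_2$, does not embed in $GL(3,\mathbb{F})$ for any field $\mathbb{F}$. *)

(* Defs.v *)
From mathcomp Require Import all_boot all_order all_algebra.
Set Implicit Arguments. Unset Strict Implicit. Unset Printing Implicit Defensive.
Import GRing.Theory.

(* The free group F2 on generators a, b, realized as freely reduced words.
   A letter is (g, e): g = false means generator a, g = true means b;
   e = false means the generator itself, e = true its inverse. *)
Definition letter := (bool * bool)%type.
Definition linv (l : letter) : letter := (l.1, ~~ l.2).

Definition reduced (w : seq letter) : bool :=
  sorted (fun x y => y != linv x) w.

Definition push (x : letter) (w : seq letter) : seq letter :=
  if w is y :: w' then (if y == linv x then w' else x :: w) else [:: x].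

Lemma reduced_push x w : reduced w -> reduced (push x w).
Proof.
case: w => [|y w] //= Hw.
case: ifP => Hy.
  by case: w Hw {Hy} => [|z w] //= /andP[].
by rewrite /reduced /= Hy.
Qed.

Lemma reduced_foldr_push u v : reduced v -> reduced (foldr push v u).
Proof. by elim: u => [|x u IH] //= Hv; apply: reduced_push; apply: IH. Qed.

Definition F2 := {w : seq letter | reduced w}.

Definition F2mul (u v : F2) : F2 :=
  exist _ (foldr push (sval v) (sval u)) (reduced_foldr_push (sval u) (svalP v)).

Definition F2xF2 := (F2 * F2)%type.
Definition F2xF2mul (x y : F2xF2) : F2xF2 := (F2mul x.1 y.1, F2mul x.2 y.2).

Definition embeds_in_GL3 (G : Type) (mul : G -> G -> G) (F : fieldType) : Prop :=
  exists phi : G -> 'M[F]_3,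
    [/\ forall g, phi g \in unitmx,
        forall g h, phi (mul g h) = (phi g *m phi h)%R
      & injective phi].

(* Main.v *)
Require Import Defs.
From mathcomp Require Import all_boot all_order all_algebra.
From mathcomp Require Import ring zify.
From Stdlib Require Import Classical.
Set Implicit Arguments. Unset Strict Implicit. Unset Printing Implicit Defensive.
Import GRing.Theory.
Local Open Scope ring_scope.

Section LA.
Variable F : fieldType.
Local Notation M := ('M[F]_3).
Local Notation V := ('rV[F]_3).

Definition indep2 (x y : V) := forall a b : F, a *: x + b *: y = 0 -> a = 0 /\ b = 0.
Definition indep3 (x y z : V) :=
  forall a b c : F, a *: x + b *: y + c *: z = 0 -> [/\ a = 0, b = 0 & c = 0].

Definition K3 (x y z : V) : M := \matrix_(i < 3) nth 0 [:: x; y; z] i.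

Lemma K3_comb (k : V) x y z : k *m K3 x y z =
  k 0 ord0 *: x + k 0 (lift ord0 ord0) *: y + k 0 (lift ord0 (lift ord0 ord0)) *: z.
Proof.
by rewrite mulmx_sum_row !big_ord_recl big_ord0 addr0 !rowK /= addrA.
Qed.

Lemma rV3_eq0 (k : V) : k 0 ord0 = 0 -> k 0 (lift ord0 ord0) = 0 ->
  k 0 (lift ord0 (lift ord0 ord0)) = 0 -> k = 0.
Proof.
move=> h0 h1 h2; apply/rowP => j; rewrite mxE.
have -> : (0 : 'I_1) = ord0 by apply: val_inj.
case: j => [[|[|[|//]]]] Hj.
- by rewrite -h0; congr (k _ _); apply: val_inj.
- by rewrite -h1; congr (k _ _); apply: val_inj.
- by rewrite -h2; congr (k _ _); apply: val_inj.
Qed.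

Lemma indep3_unit x y z : indep3 x y z -> K3 x y z \in unitmx.
Proof.
move=> H; rewrite unitmxE unitfE; apply/negP => /det0P [k nz hk].
move: hk; rewrite K3_comb => /H [h0 h1 h2].
by move: nz; rewrite (rV3_eq0 h0 h1 h2) eqxx.
Qed.

Lemma span3 x y z : indep3 x y z -> forall w : V, exists a b c, w = a *: x + b *: y + c *: z.
Proof.
move=> H w; have U := indep3_unit H.
exists ((w *m invmx (K3 x y z)) 0 ord0), ((w *m invmx (K3 x y z)) 0 (lift ord0 ord0)),
  ((w *m invmx (K3 x y z)) 0 (lift ord0 (lift ord0 ord0))).
by rewrite -K3_comb mulmxKV.
Qed.

Lemma dep3 x y z : ~ indep3 x y z ->
  exists a b c, a *: x + b *: y + c *: z = 0 /\ ~ [/\ a = 0, b = 0 & c = 0].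
Proof.
move=> H; apply: NNPP => H2; apply: H => a b c E.
apply: NNPP => H3; apply: H2; exists a, b, c; split => //.
Qed.

Lemma basis_eq x y z (A B : M) : indep3 x y z ->
  x *m A = x *m B -> y *m A = y *m B -> z *m A = z *m B -> A = B.
Proof.
move=> H hx hy hz; apply/row_matrixP => i; rewrite !rowE.
have [a [b [c ->]]] := span3 H (delta_mx 0 i).
by rewrite !mulmxDl -!scalemxAl hx hy hz.
Qed.

Definition cm (A B : M) := A *m B = B *m A.

Lemma cm_sym A B : cm A B -> cm B A. Proof. by []. Qed.
Lemma cm_refl A : cm A A. Proof. by []. Qed.
Lemma cm_scal A c : cm A c%:M. Proof. by rewrite /cm scalar_mxC. Qed.
Lemma cmD A B C : cm A B -> cm A C -> cm A (B + C).
Proof. by rewrite /cm mulmxDl mulmxDr => -> ->. Qed.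
Lemma cmN A B : cm A B -> cm A (- B).
Proof. by rewrite /cm mulmxN mulNmx => ->. Qed.
Lemma cmB A B C : cm A B -> cm A C -> cm A (B - C).
Proof. by move=> h1 h2; apply: cmD => //; apply: cmN. Qed.
Lemma cmZ A B c : cm A B -> cm A (c *: B).
Proof. by rewrite /cm -scalemxAl -scalemxAr => ->. Qed.
Lemma cmM A B C : cm A B -> cm A C -> cm A (B *m C).
Proof. by rewrite /cm => h1 h2; rewrite mulmxA h1 -mulmxA h2 mulmxA. Qed.

Definition pol (N : M) a b c : M := a%:M + b *: N + c *: (N *m N).

Lemma cm_pol N A a b c : cm N A -> cm (pol N a b c) A.
Proof.
move=> h; apply: cm_sym; apply: cmD; first apply: cmD.
- exact: cm_scal.
- exact/cmZ/cm_sym.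
- by apply/cmZ/cmM; apply: cm_sym.
Qed.

Lemma cyc (N Y Z : M) s : indep3 s (s *m N) (s *m N *m N) -> cm N Y -> cm N Z -> cm Y Z.
Proof.
move=> H.
have key : forall Y, cm N Y -> exists a b c, Y = pol N a b c.
  move=> Y0 hY; have [a [b [c E]]] := span3 H (s *m Y0).
  exists a, b, c.
  have hp : s *m pol N a b c = s *m Y0.
    by rewrite E /pol !mulmxDr mul_mx_scalar -!scalemxAr !mulmxA.
  have cP : cm N (pol N a b c) by apply: cm_sym; apply: cm_pol; apply: cm_refl.
  have step : forall t : V, t *m Y0 = t *m pol N a b c ->
      t *m N *m Y0 = t *m N *m pol N a b c.
    move=> t ht. rewrite -!mulmxA hY cP !mulmxA ht. done.
  apply: (basis_eq H).
  - by rewrite hp.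
  - by apply: step; rewrite hp.
  - by apply: (step); apply: (step); rewrite hp.
move=> hY hZ; have [a [b [c ->]]] := key _ hY; have [a' [b' [c' ->]]] := key _ hZ.
apply: cm_pol; apply: cm_sym; apply: cm_pol; apply: cm_refl.
Qed.


Lemma polyE3 (p : {poly F}) : (size p <= 3)%N -> p = (p`_0)%:P + p`_1 *: 'X + p`_2 *: 'X^2.
Proof.
move=> /leq_sizeP hs; apply/polyP => j; rewrite !coefD !coefZ coefC coefX coefXn.
case: j => [|[|[|j]]] /=; rewrite ?mulr0 ?mulr1 ?addr0 ?add0r //.
by rewrite hs.
Qed.

Lemma hornerE3 (X : M) (p : {poly F}) : (size p <= 3)%N -> horner_mx X p = pol X p`_0 p`_1 p`_2.
Proof.
move=> hs; rewrite {1}(polyE3 hs) !rmorphD /= !linearZ /= horner_mx_C horner_mx_X.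
by rewrite rmorphXn /= horner_mx_X expr2 /pol mulmxE.
Qed.

Lemma rank1_decomp (A : M) : (\rank A <= 1)%N -> exists u w : V, A = u^T *m w.
Proof.
rewrite leq_eqVlt ltnS leqn0 => /orP [/eqP r1 | /eqP r0]; last first.
  by exists 0, 0; move/eqP: r0; rewrite mxrank_eq0 => /eqP ->; rewrite mulmx0.
exists ((col_ebase A *m (delta_mx 0 0 : 'cV_3))^T), (delta_mx 0 0 *m row_ebase A).
rewrite trmxK -{1}(mulmx_ebase A) r1 !mulmxA; congr (_ *m _); rewrite -!mulmxA; congr (_ *m _).
apply/matrixP => i j; rewrite mul_delta_mx !mxE.
by case: i => [[|[|[|//]]]] Hi; case: j => [[|[|[|//]]]] Hj.
Qed.

Lemma scal_eq (X : M) : (forall v : V, exists k, v *m X = k *: v) -> exists l, X = l%:M.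
Proof.
move=> H.
have Hr : forall i : 'I_3, exists k, row i X = k *: delta_mx 0 i.
  by move=> i; rewrite rowE; apply: H.
have [k0 h0] := Hr ord0.
exists k0; apply/row_matrixP => i; rewrite [RHS]rowE mul_mx_scalar.
case: (eqVneq i ord0) => [-> // | ne].
have [ki hi] := Hr i; rewrite hi; congr (_ *: _).
have [k hk] := H (delta_mx 0 ord0 + delta_mx 0 i).
rewrite mulmxDl -!rowE h0 hi in hk.
have e0 := congr1 (fun A : V => A 0 ord0) hk.
have e1 := congr1 (fun A : V => A 0 i) hk.
move: e0 e1; rewrite !mxE /= !eqxx (negbTE ne) eq_sym (negbTE ne) /=.
rewrite !mulr1 !mulr0 addr0 add0r => -> ->; by rewrite addr0 add0r.
Qed.


Lemma shift_decomp (X : M) (l : F) : (\rank (X - l%:M)%R <= 1)%N ->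
  exists l' (u w : V), X = l'%:M + u^T *m w.
Proof.
move=> /rank1_decomp [u [w E]]; exists l, u, w.
by rewrite -E addrC subrK.
Qed.

Lemma root_lin (q : {poly F}) : size q = 2 -> root q (- q`_0 / q`_1).
Proof.
move=> szq.
have q1 : q`_1 != 0.
  have : lead_coef q != 0 by rewrite lead_coef_eq0 -size_poly_eq0 szq.
  by rewrite /lead_coef szq.
have q2 : q`_2 = 0 by apply: nth_default; rewrite szq.
rewrite /root {1}(@polyE3 q (_ : (size q <= 3)%N)); last by rewrite szq.
rewrite !(hornerD, hornerZ, hornerC, hornerX, hornerXn) q2.
apply/eqP; field; exact: q1.
Qed.

Lemma L1quad (X : M) (v : V) (a b : F) : indep2 v (v *m X) ->
  X *m X - a *: X - b%:M = 0 -> exists l (u w : V), X = l%:M + u^T *m w.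
Proof.
move=> hv hP.
pose p := mxminpoly X.
have hp0 : horner_mx X p = 0 := mx_root_minpoly X.
have pn0 : p != 0 := monic_neq0 (mxminpoly_monic X).
pose m : {poly F} := 'X^2 - a *: 'X - b%:P.
have hm : horner_mx X m = 0.
  rewrite /m !rmorphB /= linearZ /= rmorphXn /= horner_mx_X horner_mx_C expr2.
  by rewrite -mulmxE.
have m_n0 : m != 0.
  apply/eqP => h; have := congr1 (fun q : {poly F} => q`_2) h.
  rewrite coef0 !coefB coefZ coefXn coefX coefC /= mulr0 !subr0.
  by move/eqP; rewrite oner_eq0.
have szm : (size m <= 3)%N.
  apply/leq_sizeP => j hj; rewrite !coefB coefZ coefXn coefX coefC.
  by case: j hj => [|[|[|j]]] //= _; rewrite mulr0 !subr0.
have szp : size p = 3.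
  apply/eqP; rewrite eqn_leq; apply/andP; split.
    by apply: leq_trans szm; apply: dvdp_leq m_n0 _; exact: mxminpoly_min.
  rewrite ltnNge; apply/negP => hs.
  have hs3 : (size p <= 3)%N by apply: leq_trans hs _.
  have p2 : p`_2 = 0 by apply: nth_default.
  move: hp0; rewrite (hornerE3 X hs3) p2 /pol scale0r addr0 => hp0.
  have := congr1 (fun A => v *m A) hp0.
  rewrite mulmx0 mulmxDr mul_mx_scalar -scalemxAr => /hv [p0 p1].
  move: pn0; rewrite (polyE3 hs3) p0 p1 p2 !scale0r !addr0.
  by rewrite eqxx.
have dv := mxminpoly_dvd_char X.
have [g rp] : exists g : F, root p g.
  have [q [hq szq]] : exists q : {poly F}, q * p = char_poly X /\ size q = 2.
    exists (char_poly X %/ p); split; first exact: divpK.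
    by rewrite size_divp // size_char_poly szp.
  exists (- q`_0 / q`_1).
  have rq := root_lin szq.
  have ev : eigenvalue X (- q`_0 / q`_1) by rewrite eigenvalue_root_char -hq rootM rq.
  by rewrite -eigenvalue_root_min.
have [r [hr szr]] : exists r : {poly F}, r * ('X - g%:P) = p /\ size r = 2.
  exists (p %/ ('X - g%:P)); split; first by apply: divpK; rewrite dvdp_XsubCl.
  by rewrite size_divp ?size_XsubC ?szp // -size_poly_eq0 size_XsubC.
have r1 : r`_1 != 0.
  have : lead_coef r != 0 by rewrite lead_coef_eq0 -size_poly_eq0 szr.
  by rewrite /lead_coef szr.
have r2 : r`_2 = 0 by apply: nth_default; rewrite szr.
have e0 : horner_mx X r *m (X - g%:M) = 0.
  by rewrite -hp0 -hr rmorphM /= rmorphB /= horner_mx_X horner_mx_C mulmxE.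
have [d e1] : exists d, (X - d%:M) *m (X - g%:M) = 0.
  exists (- r`_0 / r`_1).
  move: e0; rewrite (@hornerE3 X r (_ : (size r <= 3)%N)); last by rewrite szr.
  rewrite r2 /pol scale0r addr0.
  have -> : (r`_0)%:M + r`_1 *: X = r`_1 *: (X - (- r`_0 / r`_1)%:M).
    rewrite scalerBr scale_scalar_mx addrC; congr (_ + _).
    have -> : r`_1 * (- r`_0 / r`_1) = - r`_0 by field; exact: r1.
    by rewrite raddfN /= opprK.
  by rewrite -scalemxAl => /eqP; rewrite scalemx_eq0 (negbTE r1) /= => /eqP.
have := mxrank_mul_min (X - d%:M) (X - g%:M); rewrite e1 mxrank0 leqn0 subn_eq0.
case: (leqP (\rank (X - d%:M)) 1) => h1 h2.
  exact: (shift_decomp h1).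
apply: (@shift_decomp X g).
move: h1 h2; set k1 := \rank _; set k2 := \rank _; move=> h1 h2; lia.
Qed.


Lemma lin_mul (X : M) c d : (X - c%:M) *m (X - d%:M) = X *m X - (c + d) *: X + (c * d)%:M.
Proof.
rewrite mulmxBl !mulmxBr mul_mx_scalar !mul_scalar_mx scale_scalar_mx.
rewrite -[(c * d)%:M]scalemx1; move: (X *m X) (1%:M : M) => XX I.
apply/matrixP => i j; rewrite !mxE; ring.
Qed.

Lemma sm0 : (0%:M : M) = 0.
Proof. by apply/matrixP => i j; rewrite !mxE mul0rn. Qed.

Lemma L1 (X Y Z : M) : cm X Y -> cm X Z -> ~ cm Y Z ->
  exists l (u w : V), X = l%:M + u^T *m w.
Proof.
move=> hY hZ nYZ.
have cycF : forall (c : F) (s : V),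
    ~ indep3 s (s *m (X - c%:M)) (s *m (X - c%:M) *m (X - c%:M)).
  move=> c s H; apply: nYZ; apply: (cyc H).
  - by apply: cm_sym; apply: cmB; [exact: cm_sym | exact: cm_scal].
  - by apply: cm_sym; apply: cmB; [exact: cm_sym | exact: cm_scal].
case: (classic (exists v : V, indep2 v (v *m X))) => [[v hv] | hno]; last first.
  have [l ->] : exists l, X = l%:M.
    apply: scal_eq => v; apply: NNPP => nex.
    apply: hno; exists v => a b E.
    case: (eqVneq b 0) => [b0 | bn0].
      rewrite b0 scale0r addr0 in E; split => //.
      move/eqP: E; rewrite scalemx_eq0 => /orP [/eqP // | /eqP v0].
      by exfalso; apply: nex; exists 0; rewrite v0 mul0mx scaler0.
    exfalso; apply: nex; exists (- a / b); apply: (scalerI bn0).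
    rewrite scalerA (_ : b * (- a / b) = - a); last by field; exact: bn0.
    move/eqP: E; rewrite addrC addr_eq0 => /eqP ->; by rewrite scaleNr.
  by exists l, 0, 0; rewrite mulmx0 addr0.
have [a [b hab]] : exists a b, v *m X *m X = a *: (v *m X) + b *: v.
  have := cycF 0 v; rewrite sm0 subr0 => /dep3 [al [be [ga [E nz]]]].
  have gn0 : ga != 0.
    apply/eqP => g0; apply: nz; rewrite g0 scale0r addr0 in E.
    by have [-> ->] := hv _ _ E.
  exists (- be / ga), (- al / ga); apply: (scalerI gn0).
  rewrite scalerDr !scalerA.
  have -> : ga * (- be / ga) = - be by field; exact: gn0.
  have -> : ga * (- al / ga) = - al by field; exact: gn0.
  move: E; move: (v *m X *m X) => z; move: (v *m X) => y E.
  apply/eqP; rewrite -subr_eq0.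
  have -> : ga *: z - (- be *: y + - al *: v) = al *: v + be *: y + ga *: z.
    by apply/rowP => j; rewrite !mxE; ring.
  by rewrite E.
pose P := X *m X - a *: X - b%:M.
have cXP : cm X P.
  apply: cmB; first apply: cmB.
  - by apply: cmM; apply: cm_refl.
  - by apply: cmZ; apply: cm_refl.
  - exact: cm_scal.
have hvP : v *m P = 0.
  rewrite /P !mulmxBr mulmxA hab -scalemxAr mul_mx_scalar.
  by move: (v *m X) => y; apply/rowP => j; rewrite !mxE; ring.
have hvXP : v *m X *m P = 0 by rewrite -mulmxA cXP mulmxA hvP mul0mx.
case: (eqVneq P 0) => [P0 | Pn0]; first exact: (L1quad hv P0).
exfalso.
have [w hw] : exists w : V, w *m P != 0.
  apply: NNPP => H; move/eqP: Pn0; apply; apply/row_matrixP => i.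
  rewrite rowE row0; apply: NNPP => hn; apply: H; exists (delta_mx 0 i).
  by apply/eqP.
have [q hq] : exists q, q = w *m P by exists (w *m P).
have qn0 : q != 0 by rewrite hq.
have ind1 : indep3 v (v *m X) w.
  move=> al be ga E; have := congr1 (fun y => y *m P) E.
  rewrite !mulmxDl -!scalemxAl hvP hvXP mul0mx !scaler0 !add0r.
  move/eqP; rewrite scalemx_eq0 (negbTE hw) orbF => /eqP g0.
  rewrite g0 scale0r addr0 in E; have [-> ->] := hv _ _ E; by [].
have [al [be [c hwX]]] := span3 ind1 (w *m X).
have hqX : q *m X = c *: q.
  rewrite hq -mulmxA -cXP mulmxA hwX !mulmxDl -!scalemxAl hvP hvXP.
  by rewrite !scaler0 !add0r.
have hqP : q *m P = (c ^+ 2 - a * c - b) *: q.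
  rewrite /P !mulmxBr mulmxA hqX -scalemxAl hqX -!scalemxAr hqX mul_mx_scalar.
  by apply/rowP => j; rewrite !mxE; ring.
case: (eqVneq (c ^+ 2 - a * c - b) 0) => [mc0 | mcn0]; last first.
  have ind2 : indep3 v (v *m X) q.
    move=> al' be' ga' E; have := congr1 (fun y => y *m P) E.
    rewrite !mulmxDl -!scalemxAl hvP hvXP hqP mul0mx !scaler0 !add0r scalerA.
    move/eqP; rewrite scalemx_eq0 (negbTE qn0) orbF mulf_eq0 (negbTE mcn0) orbF.
    move=> /eqP g0; rewrite g0 scale0r addr0 in E; have [-> ->] := hv _ _ E; by [].
  apply: (cycF 0 (v + q)); rewrite sm0 subr0 => al' be' ga' E.
  have E' : (al' + ga' * b) *: v + (be' + ga' * a) *: (v *m X)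
      + (al' + be' * c + ga' * c ^+ 2) *: q = 0.
    rewrite -E !mulmxDl hab hqX -scalemxAl hqX.
    by move: (v *m X) => y; apply/rowP => j; rewrite !mxE; ring.
  have [h1 h2 h3] := ind2 _ _ _ E'.
  have ha : al' = - (ga' * b) by apply/eqP; rewrite -addr_eq0 h1.
  have hb : be' = - (ga' * a) by apply/eqP; rewrite -addr_eq0 h2.
  have : ga' * (c ^+ 2 - a * c - b) = 0 by rewrite -h3 ha hb; ring.
  move/eqP; rewrite mulf_eq0 (negbTE mcn0) orbF => /eqP g0.
  by rewrite ha hb g0 !mul0r oppr0.
have hb : b = c ^+ 2 - a * c by move/eqP: mc0; rewrite subr_eq0 => /eqP <-.
pose d := a - c.
pose M1 := X - c%:M; pose M2 := X - d%:M.
have hPM : P = M1 *m M2.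
  rewrite /M1 /M2 lin_mul /P hb; congr (_ + _).
    by congr (_ - _ *: _); rewrite /d; ring.
  by rewrite -raddfN /=; congr (_%:M); rewrite /d; ring.
have cM1P : cm M1 P.
  by apply: cm_sym; apply: cmB; [exact: cm_sym | exact: cm_scal].
have hqM1 : q *m M1 = 0 by rewrite mulmxBr hqX mul_mx_scalar subrr.
have [s [hsP hs2]] : exists s : V, s *m P = q /\ s *m M1 *m M1 != 0.
  case: (eqVneq (w *m M1 *m M1) 0) => h; last by exists w.
  exists (w + v); split; first by rewrite mulmxDl hvP addr0 hq.
  rewrite !mulmxDl h add0r; apply/eqP => h2.
  have e3 : v *m M1 *m M2 = 0 by rewrite -mulmxA -hPM hvP.
  have hM2 : M2 = M1 + (c - d)%:M.
    by apply/matrixP => i j; rewrite /M1 /M2 /d !mxE; ring.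
  rewrite hM2 mulmxDr h2 add0r mul_mx_scalar in e3.
  move/eqP: e3; rewrite scalemx_eq0 => /orP [/eqP cd | /eqP vM1].
    have hM : M2 = M1 by rewrite hM2 cd sm0 addr0.
    by move: qn0; rewrite hq hPM hM mulmxA h eqxx.
  have E0 : c *: v + (-1) *: (v *m X) = 0.
    by move: vM1; rewrite /M1 mulmxBr mul_mx_scalar => E; rewrite scaleN1r -opprB E oppr0.
  have [_ h1] := hv _ _ E0.
  by move/eqP: h1; rewrite oppr_eq0 oner_eq0.
apply: (cycF c s) => al' be' ga' E.
have h1' : s *m M1 *m P = 0 by rewrite -mulmxA cM1P mulmxA hsP hqM1.
have h2' : s *m M1 *m M1 *m P = 0 by rewrite -mulmxA cM1P mulmxA h1' mul0mx.
have a0 : al' = 0.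
  move: (congr1 (fun y => y *m P) E).
  rewrite !mulmxDl -!scalemxAl hsP h1' h2' mul0mx !scaler0 !addr0.
  by move/eqP; rewrite scalemx_eq0 (negbTE qn0) orbF => /eqP.
rewrite a0 scale0r add0r in E.
have g1 : s *m M1 *m M2 = q by rewrite -mulmxA -hPM hsP.
have g2 : s *m M1 *m M1 *m M2 = 0 by rewrite -mulmxA -hPM h1'.
have b0 : be' = 0.
  move: (congr1 (fun y => y *m M2) E).
  rewrite !mulmxDl -!scalemxAl g1 g2 mul0mx !scaler0 !addr0.
  by move/eqP; rewrite scalemx_eq0 (negbTE qn0) orbF => /eqP.
rewrite b0 scale0r add0r in E.
by split => //; move/eqP: E; rewrite scalemx_eq0 (negbTE hs2) orbF => /eqP.
Qed.



Definition o (u w : V) : M := u^T *m w.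
Definition dot (x y : V) : F := (x *m y^T) 0 0.

Lemma dotE (x y : V) : x *m y^T = (dot x y)%:M.
Proof. exact: mx11_scalar. Qed.

Lemma oo u w u' w' : o u w *m o u' w' = dot w u' *: o u w'.
Proof. by rewrite /o mulmxA -(mulmxA _ w) dotE mul_mx_scalar -scalemxAl. Qed.

Lemma vo (x u w : V) : x *m o u w = dot x u *: w.
Proof. by rewrite /o mulmxA dotE mul_scalar_mx. Qed.

Lemma oZl k u w : o (k *: u) w = k *: o u w.
Proof. by rewrite /o linearZ /= -scalemxAl. Qed.
Lemma oZr k u w : o u (k *: w) = k *: o u w.
Proof. by rewrite /o -scalemxAr. Qed.

Lemma o_eq0 u w : o u w = 0 -> u = 0 \/ w = 0.
Proof.
move=> h; case: (eqVneq u 0) => [-> | un0]; first by left.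
right; have [i hi] : exists i, u 0 i != 0.
  apply: NNPP => H; move/eqP: un0; apply; apply/rowP => i; rewrite mxE.
  by apply/eqP; apply: NNPP => hn; apply: H; exists i; apply/negP.
have := vo (delta_mx 0 i) u w; rewrite h mulmx0.
have -> : dot (delta_mx 0 i) u = u 0 i.
  by rewrite /dot -rowE -tr_col !mxE.
move/eqP; rewrite eq_sym scalemx_eq0 (negbTE hi) /= => /eqP //.
Qed.

Lemma par_orth u1 w1 u3 w3 : o u1 w1 != 0 -> o u3 w3 != 0 ->
  o u1 w1 *m o u3 w3 = o u3 w3 *m o u1 w1 ->
  (dot w1 u3 = 0 /\ dot w3 u1 = 0) \/ exists k, o u3 w3 = k *: o u1 w1.
Proof.
move=> xn0 zn0; rewrite !oo => E.
have nz : forall u w, o u w != 0 -> u != 0 /\ w != 0.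
  by move=> u w h; split; apply: contraNneq h => ->; rewrite /o ?trmx0 ?mul0mx ?mulmx0.
have [u1n0 w1n0] := nz _ _ xn0; have [u3n0 w3n0] := nz _ _ zn0.
case: (eqVneq (dot w1 u3) 0) => ha; case: (eqVneq (dot w3 u1) 0) => hb.
- by left.
- exfalso; move: E; rewrite ha scale0r => /esym /eqP; rewrite scalemx_eq0 (negbTE hb) /=.
  by move=> /eqP /o_eq0 [h|h]; [move: u3n0 | move: w1n0]; rewrite h eqxx.
- exfalso; move: E; rewrite hb scale0r => /eqP; rewrite scalemx_eq0 (negbTE ha) /=.
  by move=> /eqP /o_eq0 [h|h]; [move: u1n0 | move: w3n0]; rewrite h eqxx.
right.
have E1 : dot w1 u3 *: o u1 w1 = dot w1 u1 *: o u3 w1.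
  have := congr1 (fun Y => Y *m o u1 w1) E; rewrite -!scalemxAl !oo !scalerA.
  by move=> H; apply: (scalerI hb); rewrite !scalerA [dot w3 u1 * _]mulrC.
have E2 : dot w1 u3 *: o u3 w3 = dot w3 u3 *: o u3 w1.
  have := congr1 (fun Y => o u3 w3 *m Y) E; rewrite -!scalemxAr !oo !scalerA.
  by move=> H; apply: (scalerI hb); rewrite !scalerA [dot w3 u1 * _]mulrC.
case: (eqVneq (dot w1 u1) 0) => ht.
  exfalso; move: E1; rewrite ht scale0r => /eqP; rewrite scalemx_eq0 (negbTE ha) /=.
  by rewrite (negbTE xn0).
exists (dot w3 u3 / dot w1 u1); apply: (scalerI ha).
rewrite E2 scalerA mulrC -scalerA E1 scalerA; congr (_ *: _).
by field; exact: ht.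
Qed.


Lemma sm0n n : (0%:M : 'M[F]_n) = 0.
Proof. by rewrite -scalemx1 scale0r. Qed.

Lemma ker_par (u1 u2 w w' : V) : \rank (col_mx u1 u2) = 2%N ->
  dot w u1 = 0 -> dot w u2 = 0 -> dot w' u1 = 0 -> dot w' u2 = 0 -> w != 0 ->
  exists k, w' = k *: w.
Proof.
move=> r2 a1 a2 b1 b2 wn0.
have hk : forall x : V, dot x u1 = 0 -> dot x u2 = 0 -> (x <= kermx (col_mx u1 u2)^T)%MS.
  move=> x h1 h2; rewrite sub_kermx tr_col_mx mul_mx_row !dotE h1 h2 sm0n row_mx0.
  by rewrite eqxx.
have rk : \rank (kermx (col_mx u1 u2)^T) = 1%N by rewrite mxrank_ker mxrank_tr r2.
have hw := hk w a1 a2; have hw' := hk w' b1 b2.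
have sKw : (kermx (col_mx u1 u2)^T <= w)%MS.
  have [_ <-] := mxrank_leqif_sup hw.
  by rewrite rank_rV wn0 rk.
have /submxP [D ->] := submx_trans hw' sKw.
by exists (D 0 0); rewrite {1}[D]mx11_scalar mul_scalar_mx.
Qed.

Lemma par (u u' : V) : u != 0 -> (\rank (col_mx u u') <= 1)%N -> exists k, u' = k *: u.
Proof.
move=> un0 r1.
have s1 : (u <= col_mx u u')%MS by rewrite -addsmxE addsmxSl.
have sc : (col_mx u u' <= u)%MS.
  have [_ <-] := mxrank_leqif_sup s1.
  have r0 := mxrankS s1; rewrite rank_rV un0 /= in r0 *.
  by rewrite eqn_leq r0 r1.
move: sc; rewrite col_mx_sub => /andP [_ /submxP [D ->]].
by exists (D 0 0); rewrite {1}[D]mx11_scalar mul_scalar_mx.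
Qed.

Definition ev_row (v : V) (A : M) := exists k, v *m A = k *: v.
Definition ev_col (u : V) (A : M) := exists k, A *m u^T = k *: u^T.

Lemma ev_row_mul v A B : ev_row v A -> ev_row v B -> ev_row v (A *m B).
Proof.
by move=> [k hk] [l hl]; exists (k * l); rewrite mulmxA hk -scalemxAl hl scalerA.
Qed.
Lemma ev_col_mul u A B : ev_col u A -> ev_col u B -> ev_col u (A *m B).
Proof.
by move=> [k hk] [l hl]; exists (l * k); rewrite -mulmxA hl -scalemxAr hk scalerA.
Qed.

Lemma ev_row_inv v A Ai : ev_row v A -> Ai *m A = 1%:M -> ev_row v Ai.
Proof.
move=> [k hk] h; have h' := mulmx1C h.
have e : v = k *: (v *m Ai) by rewrite -[v in LHS]mulmx1 -h' mulmxA hk -scalemxAl.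
case: (eqVneq k 0) => [k0 | kn0].
  by exists 0; move: e; rewrite k0 scale0r => ->; rewrite mul0mx scale0r.
by exists k^-1; rewrite {2}e scalerA mulVf // scale1r.
Qed.

Lemma ev_col_inv u A Ai : ev_col u A -> Ai *m A = 1%:M -> ev_col u Ai.
Proof.
move=> [k hk] h.
have e : u^T = k *: (Ai *m u^T) by rewrite -[u^T in LHS]mul1mx -h -mulmxA hk -scalemxAr.
case: (eqVneq k 0) => [k0 | kn0].
  exists 0; move: e; rewrite k0 scale0r => e; rewrite e mulmx0 scale0r.
  by rewrite -e. 
by exists k^-1; rewrite {2}e scalerA mulVf // scale1r.
Qed.

Lemma comm_of (P Q : M) : (P - 1%:M) *m (Q - 1%:M) = 0 -> (Q - 1%:M) *m (P - 1%:M) = 0 ->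
  P *m Q = Q *m P.
Proof.
rewrite !mulmxBl !mulmxBr !mulmx1 !mul1mx.
move: (P *m Q) (Q *m P) (1%:M : M) => PQ QP I h1 h2.
have e1 : PQ = P + Q - I.
  rewrite -[PQ]subr0 -h1; apply/matrixP => i j; rewrite !mxE; ring.
have e2 : QP = P + Q - I.
  rewrite -[QP]subr0 -h2; apply/matrixP => i j; rewrite !mxE; ring.
by rewrite e1 e2.
Qed.

Lemma mulKl (X Y Z : M) : X *m Y = 1%:M -> X *m (Y *m Z) = Z.
Proof. by move=> h; rewrite mulmxA h mul1mx. Qed.

Lemma law_core (A B Ai Bi : M) : Ai *m A = 1%:M -> Bi *m B = 1%:M ->
  (A *m B - B *m A) *m (Ai *m Bi *m A) *m (A *m B - B *m A) = 0 ->
  (A *m B - B *m A) *m (Ai *m Bi *m Ai) *m (A *m B - B *m A) = 0 ->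
  A *m B *m Ai *m Bi *m A *m A *m B *m Ai *m Bi *m Ai *m B *m A *m Bi *m Ai
    *m A *m B *m A *m Bi *m Ai *m Ai = 1%:M.
Proof.
move=> hA hB h1 h2; have hA' := mulmx1C hA; have hB' := mulmx1C hB.
move: h1 h2; set K := A *m B - B *m A => h1 h2.
have -> : A *m B *m Ai *m Bi *m A *m A *m B *m Ai *m Bi *m Ai *m B *m A *m Bi *m Ai
    *m A *m B *m A *m Bi *m Ai *m Ai =
  (A *m B *m Ai *m Bi) *m (A *m (A *m B *m Ai *m Bi) *m Ai) *m (B *m A *m Bi *m Ai)
   *m (A *m (B *m A *m Bi *m Ai) *m Ai) by rewrite !mulmxA.
move: (erefl (A *m B *m Ai *m Bi)); set P := A *m B *m Ai *m Bi => eP0.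
move: (erefl (B *m A *m Bi *m Ai)); set P' := B *m A *m Bi *m Ai => eP'0.
have eP : P - 1%:M = K *m Ai *m Bi.
  rewrite /K !mulmxBl /P; congr (_ - _).
  by rewrite -(mulmxA B A Ai) hA' mulmx1 hB'.
have eQ : A *m P *m Ai - 1%:M = A *m (P - 1%:M) *m Ai.
  by rewrite mulmxBr mulmxBl mulmx1 hA'.
have hPP' : P *m P' = 1%:M.
  rewrite /P /P' !mulmxA -(mulmxA _ Bi B) hB mulmx1 -(mulmxA _ Ai A) hA mulmx1.
  by rewrite -(mulmxA _ B Bi) hB' mulmx1 hA'.
have c1 : (P - 1%:M) *m (A *m P *m Ai - 1%:M) = 0.
  rewrite eQ eP !mulmxA.
  have -> : K *m Ai *m Bi *m A *m K = K *m (Ai *m Bi *m A) *m K by rewrite !mulmxA.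
  by rewrite h1 !mul0mx.
have c2 : (A *m P *m Ai - 1%:M) *m (P - 1%:M) = 0.
  rewrite eQ eP !mulmxA.
  have -> : A *m K *m Ai *m Bi *m Ai *m K = A *m (K *m (Ai *m Bi *m Ai) *m K).
    by rewrite !mulmxA.
  by rewrite h2 mulmx0 !mul0mx.
rewrite (comm_of c1 c2) -(mulmxA _ P P') hPP' mulmx1.
by rewrite -!mulmxA !(mulKl _ hA, mulKl _ hB, mulKl _ hB', mulKl _ hA') hA'.
Qed.

End LA.

Lemma F2eq (x y : F2) : sval x = sval y -> x = y.
Proof.
case: x y => [x hx] [y hy] /= E; subst y; congr exist; exact: bool_irrelevance.
Qed.

Lemma Peq (x y : F2xF2) : sval x.1 = sval y.1 -> sval x.2 = sval y.2 -> x = y.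
Proof. by case: x y => [x1 x2] [y1 y2] /= h1 h2; rewrite (F2eq h1) (F2eq h2). Qed.

Definition e0 : F2 := exist _ [::] erefl.
Definition fa : F2 := exist _ [:: (false, false)] erefl.
Definition fai : F2 := exist _ [:: (false, true)] erefl.
Definition fb : F2 := exist _ [:: (true, false)] erefl.
Definition fbi : F2 := exist _ [:: (true, true)] erefl.
Definition gE : F2xF2 := (e0, e0).
Definition ga : F2xF2 := (fa, e0).
Definition gai : F2xF2 := (fai, e0).
Definition gb : F2xF2 := (fb, e0).
Definition gbi : F2xF2 := (fbi, e0).
Definition gc : F2xF2 := (e0, fa).
Definition gd : F2xF2 := (e0, fb).

Definition Wd : F2xF2 := (F2xF2mul (F2xF2mul (F2xF2mul (F2xF2mul (F2xF2mul (F2xF2mul (F2xF2mul (F2xF2mul (F2xF2mul (F2xF2mul (F2xF2mul (F2xF2mul (F2xF2mul (F2xF2mul (F2xF2mul (F2xF2mul (F2xF2mul (F2xF2mul (F2xF2mul ga gb) gai) gbi) ga) ga) gb) gai) gbi) gai) gb) ga) gbi) gai) ga) gb) ga) gbi) gai) gai).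

Lemma Wd_ne : Wd <> gE.
Proof. move=> /(congr1 (fun x => sval x.1)). vm_compute. discriminate. Qed.

Section Main.
Variable F : fieldType.
Local Notation M := ('M[F]_3).
Local Notation V := ('rV[F]_3).
Local Open Scope ring_scope.

Lemma cm_shift (X Y x : M) a : X = a%:M + x -> cm X Y -> cm x Y.
Proof.
move=> E h; have -> : x = X - a%:M by rewrite E [a%:M + x]addrC addrK.
by apply: cm_sym; apply: cmB; [exact: cm_sym | exact: cm_scal].
Qed.

Lemma cm_unshift (Y x : M) a : cm x Y -> cm (a%:M + x) Y.
Proof. by move=> h; apply: cm_sym; apply: cmD; [exact: cm_scal | exact: cm_sym]. Qed.

Lemma orthL (a c : F) (u w u' w' : V) (X Z W : M) :
  X = a%:M + o u w -> Z = c%:M + o u' w' -> o u w != 0 -> o u' w' != 0 ->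
  cm X Z -> cm X W -> ~ cm Z W -> dot w u' = 0 /\ dot w' u = 0.
Proof.
move=> eX eZ n1 n2 hXZ hXW nZW.
have c1 : cm (o u w) (o u' w').
  apply: (cm_shift eX); apply: cm_sym; apply: (cm_shift eZ); exact: cm_sym.
have [//|[k hk]] := par_orth n1 n2 c1.
exfalso; apply: nZW; rewrite eZ hk; apply: cm_unshift; apply: cm_sym; apply: cmZ.
by apply: cm_sym; apply: (cm_shift eX).
Qed.

Lemma comm_expand (a b : F) (x y : M) :
  (a%:M + x) *m (b%:M + y) - (b%:M + y) *m (a%:M + x) = x *m y - y *m x.
Proof.
rewrite !mulmxDl !mulmxDr !mul_scalar_mx !mul_mx_scalar !scale_scalar_mx mulrC.
move: (x *m y) (y *m x) => xy yx; apply/matrixP => i j; rewrite !mxE; ring.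
Qed.

Lemma dot_lin (p q u : V) (a b : F) : dot (a *: p - b *: q) u = a * dot p u - b * dot q u.
Proof. by rewrite /dot mulmxBl -!scalemxAl !mxE. Qed.

Lemma dotC (x y : V) : dot x y = dot y x.
Proof. by rewrite /dot -{1}[x *m y^T]trmxK trmx_mul trmxK mxE. Qed.

Lemma dot_linr (u p q : V) (a b : F) : dot u (a *: p - b *: q) = a * dot u p - b * dot u q.
Proof. by rewrite dotC dot_lin (dotC p) (dotC q). Qed.

Lemma col_case (a b : F) (u w w' : V) (M0 : M) : ev_col u M0 ->
  let K := (a%:M + o u w) *m (b%:M + o u w') - (b%:M + o u w') *m (a%:M + o u w) in
  K *m M0 *m K = 0.
Proof.
move=> [k hk] K.
have eK : K = o u (dot w u *: w' - dot w' u *: w).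
  by rewrite /K comm_expand !oo /o mulmxBr -!scalemxAr.
rewrite eK -mulmxA {2}/o (mulmxA M0) hk -scalemxAl -scalemxAr -[u^T *m _]/(o u _) oo dot_lin.
by rewrite mulrC subrr !scale0r scaler0.
Qed.

Lemma row_case (a b : F) (u u' w : V) (M0 : M) : ev_row w M0 ->
  let K := (a%:M + o u w) *m (b%:M + o u' w) - (b%:M + o u' w) *m (a%:M + o u w) in
  K *m M0 *m K = 0.
Proof.
move=> [k hk] K.
have eK : K = o (dot w u' *: u - dot w u *: u') w.
  by rewrite /K comm_expand !oo /o [(_ - _)^T]linearB /= !linearZ /= mulmxDl -!scalemxAl mulNmx.
rewrite eK /o -(mulmxA _ w M0) hk -scalemxAr -scalemxAl (oo (dot w u' *: u - dot w u *: u') w) dot_linr.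
by rewrite mulrC subrr !scale0r scaler0.
Qed.


Lemma evc_of (X : M) a u w : X = a%:M + o u w -> ev_col u X.
Proof.
move=> ->; exists (a + dot w u).
by rewrite mulmxDl mul_scalar_mx /o -mulmxA dotE mul_mx_scalar scalerDl.
Qed.

Lemma evr_of (X : M) a u w : X = a%:M + o u w -> ev_row w X.
Proof.
move=> ->; exists (a + dot w u).
by rewrite mulmxDr mul_mx_scalar /o mulmxA dotE mul_scalar_mx scalerDl.
Qed.

End Main.

Local Open Scope ring_scope.
Theorem main_thm (F : fieldType) : ~ embeds_in_GL3 F2xF2mul F.
Proof.
move=> [phi [Hu Hm Hi]].
have hE : phi gE = 1%:M.
  have h := Hm gE gE; rewrite (_ : F2xF2mul gE gE = gE) in h; last by apply: Peq.
  have := congr1 (mulmx (invmx (phi gE))) h.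
  by rewrite mulVmx ?Hu // mulKmx ?Hu // => <-.
have inv : forall g gi, F2xF2mul gi g = gE -> phi gi *m phi g = 1%:M.
  by move=> g gi h; rewrite -Hm h hE.
have comm : forall g h, F2xF2mul g h = F2xF2mul h g -> cm (phi g) (phi h).
  by move=> g h e; rewrite /cm -!Hm e.
have ncomm : forall g h, F2xF2mul g h <> F2xF2mul h g -> ~ cm (phi g) (phi h).
  by move=> g h ne c; apply: ne; apply: Hi; rewrite !Hm.
have hA : phi gai *m phi ga = 1%:M by apply: inv; apply: Peq.
have hB : phi gbi *m phi gb = 1%:M by apply: inv; apply: Peq.
have cAC : cm (phi ga) (phi gc) by apply: comm; apply: Peq.
have cAD : cm (phi ga) (phi gd) by apply: comm; apply: Peq.
have cBC : cm (phi gb) (phi gc) by apply: comm; apply: Peq.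
have cBD : cm (phi gb) (phi gd) by apply: comm; apply: Peq.
have ncAB : ~ cm (phi ga) (phi gb).
  by apply: ncomm => /(congr1 (fun x => sval x.1)) H; vm_compute in H; discriminate.
have ncCD : ~ cm (phi gc) (phi gd).
  by apply: ncomm => /(congr1 (fun x => sval x.2)) H; vm_compute in H; discriminate.
have ncBA : ~ cm (phi gb) (phi ga) by move=> h; apply: ncAB; apply: cm_sym.
have ncDC : ~ cm (phi gd) (phi gc) by move=> h; apply: ncCD; apply: cm_sym.
have hW : phi Wd = 1%:M.
  rewrite /Wd !Hm.
  move: hA hB cAC cAD cBC cBD ncAB ncCD ncBA ncDC.
  move: (phi gai) (phi gbi) (phi ga) (phi gb) (phi gc) (phi gd) => Ai Bi A B C D.
  move=> hA hB cAC cAD cBC cBD ncAB ncCD ncBA ncDC.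
  have [a1 [u1 [w1 eA]]] := L1 cAC cAD ncCD.
  have [a2 [u2 [w2 eB]]] := L1 cBC cBD ncCD.
  have [a3 [u3 [w3 eC]]] := L1 (cm_sym cAC) (cm_sym cBC) ncAB.
  have [a4 [u4 [w4 eD]]] := L1 (cm_sym cAD) (cm_sym cBD) ncAB.
  have nz : forall (X Y : 'M[F]_3) a u w, X = a%:M + u^T *m w -> ~ cm X Y -> o u w != 0.
    move=> X Y a u w E nc; apply/eqP => h; apply: nc; rewrite E.
    move: h; rewrite /o => ->; rewrite addr0; apply: cm_sym; exact: cm_scal.
  have nzv : forall u w : 'rV[F]_3, o u w != 0 -> u != 0 /\ w != 0.
    by move=> u w h; split; apply: contraNneq h => ->; rewrite /o ?trmx0 ?mul0mx ?mulmx0.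
  have n1 := nz _ _ _ _ _ eA ncAB; have n2 := nz _ _ _ _ _ eB ncBA.
  have n3 := nz _ _ _ _ _ eC ncCD; have n4 := nz _ _ _ _ _ eD ncDC.
  have [o13a o13b] := orthL eA eC n1 n3 cAC cAD ncCD.
  have [o14a o14b] := orthL eA eD n1 n4 cAD cAC ncDC.
  have [o23a o23b] := orthL eB eC n2 n3 cBC cBD ncCD.
  have [o24a o24b] := orthL eB eD n2 n4 cBD cBC ncDC.
  have [[k hk] | [k hk]] : (exists k, u2 = k *: u1) \/ (exists k, w2 = k *: w1).
    case: (leqP (\rank (col_mx u1 u2)) 1) => hr.
      by left; apply: par hr; exact: (nzv _ _ n1).1.
    right.
    have r2 : \rank (col_mx u1 u2) = 2%N by apply/eqP; rewrite eqn_leq rank_leq_row hr.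
    have [k hk] := ker_par r2 o13b o23b o14b o24b (nzv _ _ n3).2.
    have r34 : \rank (col_mx u3 u4) = 2%N.
      case: (leqP (\rank (col_mx u3 u4)) 1) => h34; last first.
        by apply/eqP; rewrite eqn_leq rank_leq_row h34.
      exfalso; have [k' hk'] := par (nzv _ _ n3).1 h34; apply: ncCD.
      have eD' : D = a4%:M + o u4 w4 := eD.
      rewrite eD' hk hk' oZl oZr; apply: cm_sym; apply: cm_unshift; apply: cm_sym.
      apply: cmZ; apply: cmZ; apply: cm_sym; apply: (cm_shift eC); exact: cm_refl.
    exact: ker_par r34 o13a o14a o23a o24a (nzv _ _ n1).2.
  - have eB' : B = a2%:M + o u1 (k *: w2).
      by rewrite eB hk -[(k *: u1)^T *m w2]/(o (k *: u1) w2) oZl oZr.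
    have evA := evc_of eA; have evB := evc_of eB'.
    have evAi := ev_col_inv evA hA; have evBi := ev_col_inv evB hB.
    have key : forall M0, ev_col u1 M0 -> (A *m B - B *m A) *m M0 *m (A *m B - B *m A) = 0.
      by move=> M0 h; rewrite eA eB'; exact: col_case h.
    by apply: law_core => //; apply: key; repeat apply: ev_col_mul.
  - have eB' : B = a2%:M + o (k *: u2) w1.
      by rewrite eB hk -[u2^T *m (k *: w1)]/(o u2 (k *: w1)) oZl oZr.
    have evA := evr_of eA; have evB := evr_of eB'.
    have evAi := ev_row_inv evA hA; have evBi := ev_row_inv evB hB.
    have key : forall M0, ev_row w1 M0 -> (A *m B - B *m A) *m M0 *m (A *m B - B *m A) = 0.
      by move=> M0 h; rewrite eA eB'; exact: row_case h.
    by apply: law_core => //; apply: key; repeat apply: ev_row_mul.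
by apply: Wd_ne; apply: Hi; rewrite hW hE.
Qed.

Theorem corollary2p4 (F : fieldType) : ~ embeds_in_GL3 F2xF2mul F.
Proof. exact: main_thm. Qed.
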